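(* Let $X$ and $Y$ be Banach spaces, $C\in \mathcal{L}(X,Y)$, $(S_t)_{t\geq 0}$ a $C_0$-semigroup on $X$, $M \geq 1$ and $\omega \in \mathbb{R}$ such that $\lVert S_t \rVert \leq M e^{\omega t}$ for all $t \geq 0$, $\lambda^* \geq 0$, and $(P_\lambda)_{\lambda>\lambda^*}$ a family of bounded linear operators in $X$. Assume that there exist $d_0,d_1,\gamma_1 > 0$ such that \[ \forall x\in X \ \forall \lambda > \lambda^* \colon \quad \lVert P_\lambda x \rVert_{ X } \le d_0 e^{d_1 \lambda^{\gamma_1}} \lVert C P_\lambda x \rVert_{Y }, \] and that there exist $d_2\geq 1$ and $d_3,\gamma_2,\gamma_3, T>0$ with $\gamma_1<\gamma_2$ such that \[ \forall x\in X \ \forall \lambda > \lambda^* \ \forall t\in (0,T/2] \colon \quad \lVert (\mathrm{id}-P_\lambda) S_t x \rVert_{X} \le d_2 e^{-d_3 \lambda^{\gamma_2} t^{\gamma_3}} \lVert x \rVert_{X}. \] Then for all $r\in[1,\infty]$ and all $x \in X$, \[ \lVert S_T x \rVert_{X} \leq C_{\mathrm{obs}} \lVert CS_{(\cdot)}x \rVert_{L_r ((0,T);Y)} \quad\text{with}\quad C_{\mathrm{obs}} = \frac{C_1}{T^{1/r}} \exp \left(\frac{C_2}{T^{\frac{\gamma_1 \gamma_3}{\gamma_2 - \gamma_1}}} + C_3 T\right), \] where $T^{1/r} = 1$ if $r=\infty$, and \begin{align*} C_1 &= (4 M d_0) \max \Bigl\{\left( (4d_2 M^2) (d_0 \lVert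 C \rVert_{\mathcal{L} (X,Y)}+1) \right)^{8/(e \ln 2)}, e^{4d_1\left(2\lambda^*\right)^{\gamma_1}}\Bigr\}, \\ C_2 &= 4 \bigl(2^{\gamma_1} (2\cdot 4^{\gamma_3})^\frac{\gamma_1 \gamma_2}{\gamma_2-\gamma_1} d_1^{\gamma_2} / d_3^{\gamma_1} \bigr)^{\frac{1}{\gamma_2-\gamma_1}} , \\ C_3 & = \max\{\omega , 0\} \bigl(1 + 10 / (e \ln 2) \bigr). \end{align*}
   Context: $\mathcal{L}(V,W)$ denotes the space of bounded linear operators between normed spaces $V$ and $W$. For $r=\infty$ the norm $\lVert CS_{(\cdot)}x \rVert_{L_\infty((0,T);Y)}$ is $\operatorname{ess\,sup}_{\tau\in[0,T]}\lVert CS_\tau x\rVert_Y$, and for $r<\infty$ it is $(\int_0^T \lVert C S_\tau x\rVert_Y^r\,d\tau)^{1/r}$. *)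

(* Defs.v *)
From HB Require Import structures.
From mathcomp Require Import all_boot all_order all_algebra.
From mathcomp Require Import all_classical all_reals all_analysis.
Set Implicit Arguments. Unset Strict Implicit. Unset Printing Implicit Defensive.
Import Order.TTheory GRing.Theory Num.Theory.
Import numFieldNormedType.Exports.
Local Open Scope classical_set_scope.
Local Open Scope ring_scope.

Definition bounded_op {R : realType} {V W : normedModType R} (f : V -> W) : Prop :=
  exists k : R, forall x, `|f x| <= k * `|x|.

Definition opnorm {R : realType} {V W : normedModType R} (f : V -> W) : R :=
  inf [set c : R | 0 <= c /\ forall x, `|f x| <= c * `|x|].

(* (S_t)_{t >= 0} is a C_0-semigroup on X (values for t < 0 are irrelevant). *)
Definition C0_semigroup {R : realType} {X : normedModType R}
  (S : R -> {linear X -> X}) : Prop :=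
  [/\ forall t, 0 <= t -> bounded_op (S t),
      forall x, S 0 x = x,
      forall s t x, 0 <= s -> 0 <= t -> S (s + t) x = S s (S t x)
    & forall x, S t x @[t --> 0^'+] --> x].

Definition Tpow {R : realType} (T : R) (r : \bar R) : R :=
  match r with
  | r'%:E => T `^ r'^-1
  | _ => 1
  end.

Definition leb0T {R : realType} (T : R) :=
  mrestr (@lebesgue_measure R) (measurable_itv `]0, T[).

(* Main.v *)
Require Import Defs.
From HB Require Import structures.
From mathcomp Require Import all_boot all_order all_algebra.
From mathcomp Require Import all_classical all_reals all_analysis.
From mathcomp Require Import ess_sup_inf.
From mathcomp Require Import ring lra.
Import Order.TTheory GRing.Theory Num.Theory.
Import numFieldNormedType.Exports.
Local Open Scope classical_set_scope.
Local Open Scope ring_scope.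

Lemma leb0T_itv (R : realType) (T c l : R) : 0 < l -> 0 <= c -> c + l <= T ->
  leb0T T [set` `]c, c + l[] = l%:E.
Proof.
move=> l0 c0 clT.
rewrite /leb0T /= /mrestr.
rewrite setIidl; last first.
  move=> s /=; rewrite !in_itv /= => /andP[cs slt]; apply/andP; split.
    exact: le_lt_trans cs.
  exact: lt_le_trans clT.
rewrite lebesgue_measure_itv /= lte_fin ltrDl l0 -EFinD.
by congr (_%:E); rewrite addrAC subrr add0r.
Qed.

Import HBNNSimple.

Lemma int_lb (R : realType) (T c l m p : R) (g : R -> R) : 0 < l -> 0 <= c -> c + l <= T ->
  0 <= m -> 0 <= p ->
  (forall s, c < s -> s < c + l -> m <= g s) ->
  ((m `^ p * l)%:E <= \int[leb0T T]_x (`|(g x)%:E| `^ p)%E)%E.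
Proof.
move=> l0 c0 clT m0 p0 hg.
have mI : measurable ([set` `]c, c + l[] : set (measurableTypeR R)) := measurable_itv _.
rewrite ge0_integralE; last by move=> x _; exact: poweR_ge0.
apply: ereal_sup_ubound => /=.
exists (@scale_nnsfun _ _ R (@indic_nnsfun _ _ R _ mI) _ (powR_ge0 m p)).
  move=> x /=; rewrite patch_setT /= /measurable_realfun.mindic indicE.
  case: (boolP (x \in _)) => xI; last by rewrite mulr0 lee_fin powR_ge0.
  rewrite mulr1 lee_fin; apply: ge0_ler_powR => //.
  move: xI; rewrite inE /= in_itv /= => /andP[h1 h2].
  exact: le_trans (hg _ h1 h2) (ler_norm _).
rewrite sintegralrM sintegral_indic.
transitivity ((m `^ p)%:E * l%:E)%E; last by [].
by congr (_ * _)%E; exact: leb0T_itv.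
Qed.

Lemma leb0T_setT (R : realType) (T : R) : 0 < T -> leb0T T setT = T%:E.
Proof.
move=> T0; rewrite /leb0T /= /mrestr setTI lebesgue_measure_itv /= lte_fin T0.
by rewrite oppr0 adde0.
Qed.

Lemma ess_sup_lb d (T : measurableType d) (R : realType)
  (mu : {measure set T -> \bar R}) (f : T -> \bar R) (I : set T) (m : \bar R) :
  measurable I -> (0 < mu I)%E -> (forall x, I x -> (m <= f x)%E) ->
  (m <= ess_sup mu f)%E.
Proof.
move=> mI muI hf.
rewrite ess_supEae; apply/ereal_infP => y hy.
rewrite leNgt; apply/negP => ym.
case: hy => A [mA muA sub].
have IA : I `<=` A.
  move=> s Is; apply: sub => /= hs.
  by move: (lt_le_trans ym (hf _ Is)); rewrite ltNge hs.
have : (mu I <= mu A)%E.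
  by apply: le_measure; rewrite ?inE.
by rewrite muA leNgt muI.
Qed.

Lemma lnorm_lb (R : realType) (T : R) (r : \bar R) (g : R -> R) (c l m : R) :
  (1 <= r)%E -> 0 < l -> 0 <= c -> c + l <= T -> 0 <= m ->
  (forall s, c < s -> s < c + l -> m <= g s) ->
  ((m * Tpow T r)%:E <= (T / l)%:E * Lnorm (leb0T T) r (fun s => (g s)%:E))%E.
Proof.
move=> r1 l0 c0 clT m0 hg.
have T0 : 0 < T by apply: lt_le_trans clT; apply: lt_le_trans l0 _; rewrite lerDr.
have Tl1 : 1 <= T / l by rewrite ler_pdivlMr // mul1r; apply: le_trans clT; rewrite lerDr.
case: r r1 => [r'| |] //= r1.
- rewrite lee_fin in r1.
  have r0 : 0 < r' by apply: lt_le_trans r1.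
  rewrite unlock /=.
  have H := @int_lb R T c l m r' g l0 c0 clT m0 (ltW r0) hg.
  have H2 : (((m `^ r' * l) `^ r'^-1)%:E <=
      (\int[leb0T T]_x (`|(g x)%:E| `^ r')%E) `^ r'^-1)%E.
    rewrite -poweR_EFin; apply: gt0_ler_poweR => //.
    - by rewrite invr_ge0 ltW.
    - by rewrite in_itv /= leey andbT lee_fin mulr_ge0 ?powR_ge0 ?ltW.
    - rewrite in_itv /= leey andbT; apply: integral_ge0 => x _ /=; rewrite lee_fin; exact: powR_ge0.
  apply: le_trans (lee_wpmul2l _ H2); last by rewrite lee_fin divr_ge0 ?ltW.
  rewrite -EFinM lee_fin.
  have m0' : 0 <= m `^ r' by exact: powR_ge0.
  rewrite (powRM _ m0' (ltW l0)) -powRrM mulfV ?gt_eqF // powRr1 //.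
  have -> : T `^ r'^-1 = (T / l) `^ r'^-1 * l `^ r'^-1.
    by rewrite -powRM ?divfK ?gt_eqF // ltW // divr_gt0.
  rewrite mulrCA; apply: ler_wpM2r; first by rewrite mulr_ge0 // powR_ge0.
  apply: ler1_powR => //.
  by rewrite invf_le1.
- rewrite unlock /= ifT; last first.
    by rewrite /mrestr /= setTI lebesgue_measure_itv /= lte_fin T0 oppr0 adde0 lte_fin.
  rewrite mulr1.
  have hE : (m%:E <= ess_sup (leb0T T) (abse \o (fun s => (g s)%:E)))%E.
    apply: (@ess_sup_lb _ _ R (leb0T T) _ [set` `]c, (c + l)%R[]).
    + exact: measurable_itv.
    + apply: lt_le_trans (_ : (0 < l%:E)%E) _; first by rewrite lte_fin.
      rewrite le_eqVlt; apply/orP; left; apply/eqP; symmetry; exact: leb0T_itv.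
    + move=> s /=; rewrite in_itv /= => /andP[h1 h2].
      by rewrite lee_fin (le_trans (hg _ h1 h2)) // ler_norm.
  refine (le_trans hE _).
  apply: lee_pemull; last by rewrite lee_fin.
  refine (le_trans _ hE); by rewrite lee_fin.
Qed.

Lemma opnorm_prop (R : realType) (V W : normedModType R) (f : V -> W) :
  bounded_op f -> 0 <= opnorm f /\ forall x, `|f x| <= opnorm f * `|x|.
Proof.
case=> k hk.
set E := [set c : R | 0 <= c /\ forall x, `|f x| <= c * `|x|].
have E0 : E !=set0.
  exists (Num.max k 0); split; first by rewrite le_max lexx orbT.
  move=> x; apply: le_trans (hk x) _; apply: ler_wpM2r => //.
  by rewrite le_max lexx.
have lbE : lbound E 0 by move=> c [].
have inf0 : 0 <= inf E := lb_le_inf E0 lbE.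
split => // x.
have [x0|x0] := eqVneq `|x| 0.
  case: E0 => c [_ /(_ x)]; rewrite x0 !mulr0 => h; exact: h.
have xp : 0 < `|x| by rewrite lt_neqAle eq_sym x0 normr_ge0.
rewrite -ler_pdivrMr //; apply: lb_le_inf => // c [_ /(_ x) h].
by rewrite ler_pdivrMr.
Qed.

Lemma eqle (R : numDomainType) (x y : R) : x = y -> x <= y.
Proof. by move=> ->. Qed.

Section setting.
Variables (R : realType) (X Y : completeNormedModType R)
  (C : {linear X -> Y}) (S : R -> {linear X -> X}) (M w : R)
  (lstar : R) (P : R -> {linear X -> X})
  (d0 d1 g1 d2 d3 g2 g3 T : R) (nC : R).
Hypothesis hnC : 0 <= nC.
Hypothesis hC : forall z, `|C z| <= nC * `|z|.
Hypothesis hS : forall s t x, 0 <= s -> 0 <= t -> S (s + t) x = S s (S t x).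
Hypothesis hM : forall t, 0 <= t -> forall x, `|S t x| <= M * expR (w * t) * `|x|.
Hypothesis M1 : 1 <= M.
Hypothesis hd0 : 0 < d0.
Hypothesis hd1 : 0 < d1.
Hypothesis hd2 : 1 <= d2.
Hypothesis hd3 : 0 < d3.
Hypothesis hg3 : 0 < g3.
Hypothesis hP1 : forall x l, lstar < l ->
     `|P l x| <= d0 * expR (d1 * l `^ g1) * `|C (P l x)|.
Hypothesis hP2 : forall x l t, lstar < l -> 0 < t -> t <= T / 2 ->
     `|S t x - P l (S t x)| <= d2 * expR (- (d3 * l `^ g2 * t `^ g3)) * `|x|.

Let mu := Num.max w 0.
Let K := d2 * (d0 * nC + 1).

Lemma estA y t l : lstar < l -> 0 < t -> t <= T / 2 ->
  `|S t y| <= d0 * expR (d1 * l `^ g1) * `|C (S t y)|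
     + K * expR (d1 * l `^ g1) * expR (- (d3 * l `^ g2 * t `^ g3)) * `|y|.
Proof.
move=> hl t0 tT.
set z := S t y; set u := d1 * l `^ g1; set D := d3 * l `^ g2 * t `^ g3.
have h1 : `|z| <= `|P l z| + `|z - P l z|.
  by have := ler_normD (P l z) (z - P l z); rewrite [P l z + _]addrC subrK.
have h2 := hP1 z l hl.
have h3 : `|C (P l z)| <= `|C z| + nC * `|z - P l z|.
  have -> : C (P l z) = C z - C (z - P l z) by rewrite linearB opprB addrC subrK.
  apply: le_trans (ler_normB _ _) _; apply: lerD => //.
have h4 : `|z - P l z| <= d2 * expR (- D) * `|y| := hP2 y l t hl t0 tT.
have u0 : 0 <= u by apply: mulr_ge0; [exact: ltW | exact: powR_ge0].
have eu : 1 <= expR u by rewrite -expR0 ler_expR.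
set del := `|z - P l z|.
have del0 : 0 <= del by exact: normr_ge0.
have e0 : 0 < expR u := expR_gt0 u.
have h5 : `|z| <= d0 * expR u * `|C z| + (d0 * expR u * nC + 1) * del.
  apply: le_trans h1 _.
  have : `|P l z| <= d0 * expR u * (`|C z| + nC * del).
    apply: le_trans h2 _; apply: ler_wpM2l => //.
    by rewrite mulr_ge0 ?ltW.
  move=> h; apply: le_trans (lerD h (lexx del)) _.
  by rewrite mulrDr mulrDl mul1r addrA mulrA.
apply: le_trans h5 _; rewrite lerD2l.
have : (d0 * expR u * nC + 1) <= expR u * (d0 * nC + 1) by nra.
move=> h6.
apply: le_trans (ler_wpM2r del0 h6) _.
have q0 : 0 <= expR u * (d0 * nC + 1).
  by rewrite mulr_ge0 ?expR_ge0 // addr_ge0 // mulr_ge0 // ltW.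
apply: le_trans (ler_wpM2l q0 h4) _.
rewrite /K le_eqVlt; apply/orP; left; apply/eqP; ring.
Qed.


Lemma step x a tau s l : 0 <= a -> 0 < tau -> tau <= T / 2 -> lstar < l ->
  a + tau / 2 <= s -> s <= a + tau ->
  `|S (a + tau) x| <= M * expR (mu * tau) *
    (d0 * expR (d1 * l `^ g1) * `|C (S s x)|
     + K * expR (d1 * l `^ g1) * expR (- (d3 * l `^ g2 * (tau / 2) `^ g3)) * `|S a x|).
Proof.
move=> a0 tau0 tauT hl h1 h2.
have tau2 : 0 < tau / 2 by rewrite divr_gt0.
have sa : 0 < s - a by rewrite subr_gt0; apply: lt_le_trans h1; rewrite ltrDl.
have s0 : 0 <= s by apply: le_trans a0 _; apply: ltW; rewrite -subr_gt0.
have d0' : 0 <= a + tau - s by rewrite subr_ge0.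
have e1 : S (a + tau) x = S (a + tau - s) (S s x) by rewrite -hS // subrK.
have e2 : S s x = S (s - a) (S a x) by rewrite -hS ?subrK // ltW.
have mu0 : 0 <= mu by rewrite le_max lexx orbT.
have h3 : `|S (a + tau) x| <= M * expR (mu * tau) * `|S s x|.
  rewrite e1; apply: le_trans (hM _ d0' (S s x)) _.
  apply: ler_wpM2r => //; apply: ler_wpM2l; first by apply: le_trans M1.
  rewrite ler_expR; apply: le_trans (_ : mu * (a + tau - s) <= _).
    by apply: ler_wpM2r => //; rewrite le_max lexx.
  apply: ler_wpM2l => //; lra.
apply: le_trans h3 _; apply: ler_wpM2l; first by rewrite mulr_ge0 ?expR_ge0 //; apply: le_trans M1.
have sT : s - a <= T / 2 by apply: le_trans tauT; rewrite lerBlDl.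
have := estA (S a x) (s - a) l hl sa sT; rewrite -e2 => h4.
apply: le_trans h4 _; rewrite lerD2l.
apply: ler_wpM2r => //; apply: ler_wpM2l.
  rewrite mulr_ge0 ?expR_ge0 // /K mulr_ge0 //; first by apply: le_trans hd2.
  by rewrite addr_ge0 // mulr_ge0 // ltW.
rewrite ler_expR lerN2; apply: ler_wpM2l.
  by rewrite mulr_ge0 ?powR_ge0 // ltW.
apply: ge0_ler_powR; [exact: ltW | by rewrite nnegrE ltW | by rewrite nnegrE ltW | lra].
Qed.

Lemma stepL x a tau l r Lr : 0 <= a -> 0 < tau -> tau <= T / 2 -> lstar < l ->
  a + tau <= T -> (1 <= r)%E ->
  Lnorm (leb0T T) r (fun t => (`|C (S t x)|)%:E) = Lr%:E -> 0 < Tpow T r ->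
  `|S (a + tau) x| <= M * expR (mu * tau) * d0 * expR (d1 * l `^ g1) * (2 * T / tau) * (Lr / Tpow T r)
     + M * expR (mu * tau) * K * expR (d1 * l `^ g1) * expR (- (d3 * l `^ g2 * (tau / 2) `^ g3)) * `|S a x|.
Proof.
move=> a0 tau0 tauT hl aT r1 hL Tp0.
set al := M * expR (mu * tau) * d0 * expR (d1 * l `^ g1).
set E := M * expR (mu * tau) * K * expR (d1 * l `^ g1) * expR (- (d3 * l `^ g2 * (tau / 2) `^ g3)).
set n1 := `|S (a + tau) x|; set n0 := `|S a x|.
have al0 : 0 < al.
  rewrite /al !mulr_gt0 ?expR_gt0 //; apply: lt_le_trans M1; exact: ltr01.
set m := Num.max 0 ((n1 - E * n0) / al).
have tau2 : 0 < tau / 2 by rewrite divr_gt0.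
have hm : forall s, a + tau / 2 < s -> s < a + tau / 2 + tau / 2 -> m <= `|C (S s x)|.
  move=> s hs1 hs2; rewrite ge_max normr_ge0 /= ler_pdivrMr //.
  have hs2' : s <= a + tau by rewrite [tau in a + tau]splitr addrA ltW.
  have h := step x a tau s l a0 tau0 tauT hl (ltW hs1) hs2'.
  rewrite /n1 lerBlDr; apply: le_trans h _.
  by rewrite /al /E /n0; apply: eqle; ring.
have clT : a + tau / 2 + tau / 2 <= T by rewrite -addrA -splitr.
have m0 : 0 <= m by rewrite le_max lexx.
have hmT := @lnorm_lb R T r (fun t => `|C (S t x)|) (a + tau / 2) (tau / 2) m r1 tau2
   (addr_ge0 a0 (ltW tau2)) clT m0 hm.
rewrite hL -EFinM lee_fin in hmT.
have hq : (n1 - E * n0) / al <= m by rewrite le_max lexx orbT.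
have h5 : n1 - E * n0 <= T / (tau / 2) * Lr / Tpow T r * al.
  rewrite ler_pdivrMr // in hq; apply: le_trans hq _; apply: ler_wpM2r; first exact: ltW.
  by rewrite ler_pdivlMr.
rewrite lerBlDr in h5.
apply: le_trans h5 _.
rewrite /al /E; apply: eqle.
field.
by rewrite gt_eqF // gt_eqF.
Qed.

End setting.


Lemma eqle' (R : numDomainType) (x y : R) : x = y -> x <= y.
Proof. by move=> ->. Qed.

Definition hh (R : realType) (N : nat) : R := (2^-1) ^+ N.

Lemma iter_bound (R : realType) (n u : nat -> R) (G Y B : R) :
  0 <= G -> 0 <= Y -> (forall k, 0 <= n k) -> (forall k, n k <= B) ->
  (forall k, 0 <= u k) ->
  (forall k, n k <= G * expR (u k) * 2 ^+ k.+2 * Y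
                    + 4^-1 * expR (u k - u k.+1) * n k.+1) ->
  n 0 <= 8 * G * expR (u 0) * Y.
Proof.
move=> G0 Y0 n0 nB u0 hk.
set A := 8 * G * expR (u 0) * Y.
have A0 : 0 <= A by rewrite /A !mulr_ge0 ?expR_ge0.
have h0 N : 0 < hh R N by rewrite /hh exprn_gt0 // invr_gt0.
have h1 N : hh R N <= 1 by rewrite /hh exprn_ile1 // ?invr_ge0 // invf_le1 // ler1n.
have inv : forall N, n 0 <= A * (1 - hh R N) + (hh R N) ^+ 2 * expR (u 0 - u N) * n N.
  elim=> [|N IH].
    by rewrite /hh expr0 subrr mulr0 add0r expr1n mul1r subrr expR0 mul1r.
  apply: le_trans IH _.
  set E1 := expR (u 0 - u N).
  have E10 : 0 <= E1 by rewrite expR_ge0.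
  have e1 : E1 * expR (u N) = expR (u 0) by rewrite -expRD subrK.
  have e2 : E1 * expR (u N - u N.+1) = expR (u 0 - u N.+1) by rewrite -expRD addrA subrK.
  have e3 : 2 ^+ N = (hh R N)^-1 by rewrite /hh exprVn invrK.
  have hS : hh R N.+1 = 2^-1 * (hh R N) by rewrite /hh exprS.
  have qn0 : (hh R N) != 0 by rewrite gt_eqF.
  have q2 : 0 <= (hh R N) ^+ 2 * E1 by rewrite mulr_ge0 // exprn_ge0 // ltW.
  have := ler_wpM2l q2 (hk N); rewrite mulrDr => hb.
  have i1 : (hh R N) ^+ 2 * E1 * (G * expR (u N) * 2 ^+ N.+2 * Y) = 4 * (hh R N) * G * expR (u 0) * Y.
    by rewrite -e1 [2 ^+ N.+2]exprS [2 ^+ N.+1]exprS e3; field.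
  have i2 : (hh R N) ^+ 2 * E1 * (4^-1 * expR (u N - u N.+1) * n N.+1)
        = (2^-1 * (hh R N)) ^+ 2 * expR (u 0 - u N.+1) * n N.+1.
    by rewrite -e2; field.
  rewrite i1 i2 in hb.
  apply: le_trans (lerD (lexx (A * (1 - hh R N))) hb) _; rewrite hS.
  by apply: eqle'; rewrite /A; field; rewrite ?pnatr_eq0.
have fin : forall N, n 0 <= A + hh R N * (expR (u 0) * B).
  move=> N; apply: le_trans (inv N) _.
  have hN0 := h0 N; have hN1 := h1 N.
  have B0 : 0 <= B by apply: le_trans (n0 0) (nB 0).
  have e4 : expR (u 0 - u N) <= expR (u 0) by rewrite ler_expR lerBlDr lerDl.
  have e5 : 0 <= expR (u 0 - u N) := expR_ge0 _.
  have e6 : 0 <= expR (u 0) := expR_ge0 _.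
  have p1 : expR (u 0 - u N) * n N <= expR (u 0) * B.
    by apply: ler_pM => //; exact: nB.
  have p2 : hh R N ^+ 2 <= hh R N by rewrite expr2 ler_piMr // ltW.
  have p3 : 0 <= expR (u 0 - u N) * n N by rewrite mulr_ge0.
  rewrite -mulrA; apply: lerD; first by rewrite ler_piMr //; lra.
  apply: ler_pM => //; by rewrite exprn_ge0 // ltW.
apply/ler_addgt0Pr => e e0.
set c := expR (u 0) * B.
have c0 : 0 <= c by rewrite mulr_ge0 ?expR_ge0 //; apply: le_trans (n0 0) (nB 0).
have := archi_boundP (divr_ge0 c0 (ltW e0)).
set N := Num.Def.archi_bound _ => hN.
apply: le_trans (fin N) _; rewrite lerD2l.
have h2N : hh R N = (2 ^+ N)^-1 by rewrite /hh exprVn.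
rewrite h2N mulrC -/(c / _) ler_pdivrMr ?exprn_gt0 //.
rewrite ltr_pdivrMr // in hN.
apply: le_trans (ltW hN) _; rewrite [X in X <= _]mulrC; apply: ler_wpM2l; first exact: ltW.
rewrite -natrX ler_nat; apply: ltnW; exact: ltn_expl.
Qed.

Lemma lnMp (R : realType) (x y : R) : 0 < x -> 0 < y -> ln (x * y) = ln x + ln y.
Proof. by move=> x0 y0; rewrite lnM ?posrE. Qed.

Lemma lnDp (R : realType) (x y : R) : 0 < x -> 0 < y -> ln (x / y) = ln x - ln y.
Proof. by move=> x0 y0; rewrite ln_div ?posrE. Qed.

Arguments lnMp {R} [x y].
Arguments lnDp {R} [x y].

Lemma ln2X (R : realType) (n : nat) : ln ((2 : R) ^+ n) = n%:R * ln 2.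
Proof. by rewrite lnXn // mulr_natl. Qed.

Lemma ln4 (R : realType) : ln (4 : R) = 2 * ln 2.
Proof. by rewrite (_ : (4 : R) = 2 ^+ 2) ?ln2X //; rewrite expr2; ring. Qed.

Lemma Dk_bound (R : realType) (d1 d3 g1 g2 g3 T u0 : R) (k : nat) :
  0 < d1 -> 0 < d3 -> 0 < g1 -> g1 < g2 -> 0 < g3 -> 0 < T ->
  4 * (2 `^ g1 * (2 * 4 `^ g3) `^ (g1 * g2 / (g2 - g1)) * d1 `^ g2 / d3 `^ g1) `^ (1 / (g2 - g1))
     / T `^ (g1 * g3 / (g2 - g1)) <= u0 ->
  2 * 2 `^ (g1 * g3 / (g2 - g1)) * (u0 * (2 `^ (g1 * g3 / (g2 - g1))) ^+ k) <=
  d3 * ((u0 * (2 `^ (g1 * g3 / (g2 - g1))) ^+ k) / d1) `^ (1 / g1) `^ g2 * (T / 2 ^+ k.+2) `^ g3.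
Proof.
move=> d10 d30 g10 g12 g30 T0.
set b := g1 * g3 / (g2 - g1).
set inner := 2 `^ g1 * (2 * 4 `^ g3) `^ (g1 * g2 / (g2 - g1)) * d1 `^ g2 / d3 `^ g1.
set C2 := 4 * inner `^ (1 / (g2 - g1)).
move=> hu.
have del0 : 0 < g2 - g1 by rewrite subr_gt0.
have p2 : (0 : R) < 2 by [].
have p4 : (0 : R) < 4 by [].
have a0 : 0 < 2 `^ b := powR_gt0 _ p2.
have inner0 : 0 < inner.
  rewrite /inner; apply: divr_gt0; last exact: powR_gt0.
  rewrite !mulr_gt0 // powR_gt0 // mulr_gt0 // powR_gt0 //.
have C20 : 0 < C2 by rewrite /C2 mulr_gt0 // powR_gt0.
have Tb0 : 0 < T `^ b := powR_gt0 _ T0.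
have u00 : 0 < u0 by apply: lt_le_trans hu; exact: divr_gt0.
set uk := u0 * (2 `^ b) ^+ k.
have uk0 : 0 < uk by rewrite /uk mulr_gt0 // exprn_gt0.
have lam0 : 0 < (uk / d1) `^ (1 / g1) by rewrite powR_gt0 // divr_gt0.
have t0 : 0 < T / 2 ^+ k.+2 by rewrite divr_gt0 // exprn_gt0.
have L2p : 0 < ln (2 : R) by rewrite ln_gt0 // ltr1n.
have lnu0 : ln C2 - b * ln T <= ln u0.
  by rewrite -ln_powR -lnDp // ler_ln ?posrE // divr_gt0.
have lC2 : ln C2 = 2 * ln 2 + (1 / (g2 - g1)) * (g1 * ln 2 +
      (g1 * g2 / (g2 - g1)) * (ln 2 + g3 * (2 * ln 2)) + g2 * ln d1 - g1 * ln d3).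
  have q1 : 0 < 2 * 4 `^ g3 by rewrite mulr_gt0 // powR_gt0.
  have q2 : 0 < 2 `^ g1 * (2 * 4 `^ g3) `^ (g1 * g2 / (g2 - g1)).
    by rewrite mulr_gt0 // powR_gt0.
  have q3 : 0 < 2 `^ g1 * (2 * 4 `^ g3) `^ (g1 * g2 / (g2 - g1)) * d1 `^ g2.
    by rewrite mulr_gt0 // powR_gt0.
  rewrite /C2 (lnMp p4 (powR_gt0 _ inner0)) ln4 ln_powR; congr (_ + _ * _).
  rewrite /inner (lnDp q3 (powR_gt0 _ d30)) (lnMp q2 (powR_gt0 _ d10)).
  rewrite (lnMp (powR_gt0 _ p2) (powR_gt0 _ q1)) !ln_powR (lnMp p2 (powR_gt0 _ p4)).
  rewrite ln_powR ln4.
  ring.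
have luk : ln uk = ln u0 + k%:R * (b * ln 2).
  by rewrite /uk lnMp ?exprn_gt0 // lnXn // ln_powR mulr_natl.
have lL : ln (d3 * (uk / d1) `^ (1 / g1) `^ g2 * (T / 2 ^+ k.+2) `^ g3)
    = ln d3 + g2 * ((1 / g1) * (ln uk - ln d1)) + g3 * (ln T - (k%:R + 2) * ln 2).
  have r1 : 0 < (uk / d1) `^ (1 / g1) `^ g2 := powR_gt0 _ lam0.
  have r2 : 0 < d3 * (uk / d1) `^ (1 / g1) `^ g2 by rewrite mulr_gt0.
  rewrite (lnMp r2 (powR_gt0 _ t0)) (lnMp d30 r1) !ln_powR.
  rewrite (lnDp uk0 d10) (lnDp T0 (exprn_gt0 _ p2)) ln2X.
  by rewrite -addn2 natrD.
have lR : ln (2 * 2 `^ b * uk) = ln 2 + b * ln 2 + ln uk.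
  by rewrite lnMp ?mulr_gt0 // lnMp // ln_powR.
rewrite -ler_ln ?posrE; last 2 first.
- by rewrite !mulr_gt0.
- by rewrite !mulr_gt0 // powR_gt0.
rewrite lL lR luk -subr_ge0.
have -> : ln d3 + g2 * (1 / g1 * (ln u0 + k%:R * (b * ln 2) - ln d1)) +
    g3 * (ln T - (k%:R + 2) * ln 2) - (ln 2 + b * ln 2 + (ln u0 + k%:R * (b * ln 2)))
  = (g2 - g1) / g1 * (ln u0 - (ln C2 - b * ln T))
    + ln 2 * (2 * (g2 - g1) / g1 + g2 / (g2 - g1) + g3 * g1 / (g2 - g1)).
  rewrite lC2 /b; field.
  by rewrite !gt_eqF.
apply: addr_ge0; first by rewrite mulr_ge0 ?subr_ge0 // divr_ge0 // ltW.
apply: mulr_ge0; first exact: ltW.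
have g20 : 0 < g2 by apply: lt_trans g12.
apply: addr_ge0; first apply: addr_ge0.
- by apply: divr_ge0; [rewrite mulr_ge0 // ltW | exact: ltW].
- by apply: divr_ge0; apply: ltW.
- by apply: divr_ge0; [rewrite mulr_ge0 // ltW | exact: ltW].
Qed.

Lemma const_bound (R : realType) (A y mu T X E C3 MK : R) :
  0 <= A -> 1 <= MK -> 0 <= mu -> 0 < T -> 0 <= y ->
  8 * MK <= X -> 4 <= X -> expR (2 * y) <= E -> 2 * mu <= C3 ->
  2 * expR (mu * T) *
    expR (Num.max A (Num.max (ln (4 * MK * expR (mu * T))) y))
  <= Num.max X E * expR A * expR (C3 * T).
Proof.
move=> A0 MK1 mu0 T0 y0 hX8 hX4 hE hC3.
set c := ln (4 * MK * expR (mu * T)).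
have q0 : 0 < 4 * MK * expR (mu * T).
  by rewrite !mulr_gt0 ?expR_gt0 //; apply: lt_le_trans MK1.
have ec : expR c = 4 * MK * expR (mu * T) by rewrite /c lnK.
have c0 : 0 <= c.
  rewrite /c ln_ge0 //.
  have : 1 <= expR (mu * T) by rewrite -expR0 ler_expR mulr_ge0 // ltW.
  move=> h; nra.
set m := Num.max c y.
have m0 : 0 <= m by rewrite le_max c0.
have h1 : expR (Num.max A m) <= expR A * expR m.
  by rewrite -expRD ler_expR ge_max lerDl lerDr m0 A0.
have eT : expR (mu * T) <= expR (C3 * T).
  rewrite ler_expR; apply: ler_wpM2r; [exact: ltW | lra].
have e2T : expR (mu * T) * expR (mu * T) <= expR (C3 * T).
  rewrite -expRD ler_expR -mulrDl; apply: ler_wpM2r; [exact: ltW | lra].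
have eA := expR_gt0 A.
have emT := expR_gt0 (mu * T).
apply: le_trans (_ : 2 * expR (mu * T) * (expR A * expR m) <= _).
  by apply: ler_wpM2l => //; rewrite mulr_ge0 // ltW.
have eqle2 (x z : R) : x = z -> x <= z by move=> ->.
have [cy|yc] := leP y c.
- have -> : m = c by rewrite /m max_l.
  rewrite ec.
  have hX : 8 * MK <= Num.max X E by rewrite le_max hX8.
  apply: le_trans (_ : (8 * MK * expR A) * (expR (mu * T) * expR (mu * T)) <= _).
    by apply: eqle2; ring.
  apply: ler_pM.
  + rewrite mulr_ge0 // ?ltW //; lra.
  + by rewrite mulr_ge0 // ltW.
  + by apply: ler_wpM2r => //; exact: ltW.
  + exact: e2T.
- have -> : m = y by rewrite /m max_r // ltW.
  have hy : 2 * expR y <= Num.max X E.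
    have [ey|ey] := leP 2 (expR y).
    + rewrite le_max; apply/orP; right; apply: le_trans hE.
      rewrite mulrC (_ : 2 * y = y + y); last by ring.
      by rewrite expRD ler_wpM2l // ltW // expR_gt0.
    + rewrite le_max; apply/orP; left; lra.
  apply: le_trans (_ : (2 * expR y * expR A) * expR (mu * T) <= _).
    by apply: eqle2; ring.
  apply: ler_pM.
  + by rewrite mulr_ge0 // ?ltW // mulr_ge0 // ltW // expR_gt0.
  + exact: ltW.
  + by apply: ler_wpM2r => //; exact: ltW.
  + exact: eT.
Qed.

Lemma e_ln2 (R : realType) : 0 < expR (1 : R) * ln 2 <= 4.
Proof.
have l20 : 0 < ln (2 : R) by rewrite ln_gt0 // ltr1n.
have l21 : ln (2 : R) <= 1.
  have := @le_ln1Dx R 1; rewrite (_ : (1 + 1 : R) = 2); last by ring.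
  by apply; lra.
set v := expR (2^-1 : R).
set w' := expR (- 2^-1 : R).
have hv : 0 < v := expR_gt0 _.
have hw : 1 - 2^-1 <= w' := expR_ge1Dx _.
have hvw : v * w' = 1 by rewrite /v /w' -expRD subrr expR0.
have ev : expR (1 : R) = v * v.
  by rewrite /v -expRD (_ : (2^-1 + 2^-1 : R) = 1) //; field.
have v2 : v <= 2.
  have h2 : (1 - 2^-1 : R) = 2^-1 by field.
  rewrite h2 in hw.
  have : v * (w' - 2^-1) >= 0 by rewrite mulr_ge0 ?subr_ge0 // ltW.
  rewrite mulrBr hvw => h.
  have : v * 2^-1 <= 1 by lra.
  by rewrite ler_pdivrMr // mul1r.
apply/andP; split; first by rewrite mulr_gt0 // expR_gt0.
rewrite ev.
have : v * v <= 4 by nra.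
move=> h; nra.
Qed.

Theorem theorem2p1 (R : realType) (X Y : completeNormedModType R)
  (C : {linear X -> Y}) (S : R -> {linear X -> X}) (M w : R)
  (lstar : R) (P : R -> {linear X -> X})
  (d0 d1 g1 d2 d3 g2 g3 T : R) :
  bounded_op C ->
  C0_semigroup S ->
  1 <= M ->
  (forall t, 0 <= t -> forall x, `|S t x| <= M * expR (w * t) * `|x|) ->
  0 <= lstar ->
  (forall l, lstar < l -> bounded_op (P l)) ->
  0 < d0 -> 0 < d1 -> 0 < g1 ->
  (forall x l, lstar < l ->
     `|P l x| <= d0 * expR (d1 * l `^ g1) * `|C (P l x)|) ->
  1 <= d2 -> 0 < d3 -> 0 < g2 -> 0 < g3 -> 0 < T -> g1 < g2 ->
  (forall x l t, lstar < l -> 0 < t -> t <= T / 2 ->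
     `|S t x - P l (S t x)| <= d2 * expR (- (d3 * l `^ g2 * t `^ g3)) * `|x|) ->
  let C1 := 4 * M * d0 *
      Num.max ((4 * d2 * M ^+ 2 * (d0 * opnorm C + 1)) `^ (8 / (expR 1 * ln 2)))
              (expR (4 * d1 * (2 * lstar) `^ g1)) in
  let C2 := 4 * (2 `^ g1 * (2 * 4 `^ g3) `^ (g1 * g2 / (g2 - g1))
                 * d1 `^ g2 / d3 `^ g1) `^ (1 / (g2 - g1)) in
  let C3 := Num.max w 0 * (1 + 10 / (expR 1 * ln 2)) in
  forall (r : \bar R) (x : X), (1 <= r)%E ->
    let Cobs := C1 / Tpow T r * expR (C2 / T `^ (g1 * g3 / (g2 - g1)) + C3 * T) in
    ((`|S T x|)%:E <= Cobs%:E * Lnorm (leb0T T) r (fun tau => (`|C (S tau x)|)%:E))%E.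
Proof.
move=> hCb hS0 M1 hM hl0 _ hd0 hd1 hg1 hP1 hd2 hd3 hg2 hg3 hT hg12 hP2 C1 C2 C3 r x hr.
cbv zeta.
set Cobs := C1 / Tpow T r * _.
case: hS0 => _ _ hS _.
have [hnC hC] := @opnorm_prop R X Y C hCb.
set nC := opnorm C.
set mu := Num.max w 0.
set K := d2 * (d0 * nC + 1).
have mu0 : 0 <= mu by rewrite le_max lexx orbT.
have M0 : 0 < M by apply: lt_le_trans M1; exact: ltr01.
have K1 : 1 <= K.
  rewrite /K; have : 0 <= d0 * nC by rewrite mulr_ge0 // ltW.
  move=> h; nra.
pose q := expR (1:R) * ln (2:R).
have [eln0 eln4] : 0 < q /\ q <= 4 by apply/andP; exact: e_ln2.
pose Z := 4 * d2 * M ^+ 2 * (d0 * nC + 1).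
have Zeq : Z = 4 * M ^+ 2 * K by rewrite /Z /K; ring.
have M21 : 1 <= M ^+ 2 by rewrite exprn_ege1.
have Z4 : 4 <= Z by rewrite Zeq; nra.
have p2 : 2 <= 8 / q by rewrite ler_pdivlMr //; lra.
have Zp2 : Z ^+ 2 <= Z `^ (8 / q).
  rewrite -powR_mulrn; last by lra.
  by apply: ler_powR => //; lra.
have ZpZ : Z <= Z `^ (8 / q) by apply: le1r_powR; lra.
have X8 : 8 * (M * K) <= Z `^ (8 / q).
  apply: le_trans Zp2; rewrite Zeq.
  have : 1 <= M * K by rewrite -[1]mulr1 ler_pM.
  have : 1 <= M ^+ 2 * K by rewrite -[1]mulr1 ler_pM // exprn_ege1.
  move=> h1 h2.
  have -> : (4 * M ^+ 2 * K) ^+ 2 = 16 * (M ^+ 2 * K) * (M ^+ 2 * K) by ring.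
  have h3 : M <= M ^+ 2 by rewrite expr2; nra.
  have h4 : M * K <= M ^+ 2 * K by apply: ler_wpM2r; [lra | exact: h3].
  nra.
have C3ge : 2 * mu <= C3.
  rewrite /C3 -/mu -/q.
  have : 1 <= 10 / q by rewrite ler_pdivlMr //; lra.
  move=> h; nra.
set L := Lnorm (leb0T T) r (fun tau => (`|C (S tau x)|)%:E).
have L0 : (0 <= L)%E := Lnorm_ge0 _ _ _.
have Tp0 : 0 < Tpow T r.
  by rewrite /Tpow; case: (r) => [r'| |]; [exact: powR_gt0 | exact: ltr01 | exact: ltr01].
have Max0 : 0 < Num.max (Z `^ (8 / q)) (expR (4 * d1 * (2 * lstar) `^ g1)).
  by apply: (lt_le_trans (expR_gt0 (4 * d1 * (2 * lstar) `^ g1))); rewrite le_max lexx orbT.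
have C10 : 0 < C1 by rewrite /C1 -/nC -/Z -/q !mulr_gt0 //.
have Cobs0 : 0 < Cobs by rewrite /Cobs !mulr_gt0 ?invr_gt0 ?expR_gt0.
case hL : L => [Lr| |]; last by move: L0; rewrite hL.
  2: by rewrite gt0_muley ?leey // lte_fin.

rewrite -EFinM lee_fin.
have Lr0 : 0 <= Lr by move: L0; rewrite hL lee_fin.
set Yv := Lr / Tpow T r.
have Y0 : 0 <= Yv by rewrite divr_ge0 // ltW.
pose b := g1 * g3 / (g2 - g1).
pose a := (2 : R) `^ b.
have del0 : 0 < g2 - g1 by rewrite subr_gt0.
have b0 : 0 <= b by rewrite /b divr_ge0 // ?mulr_ge0 // ltW.
have two1 : (1:R) <= 2 by lra.
have a1 : 1 <= a by have := ler_powR two1 b0; rewrite powRr0.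
pose A := C2 / T `^ b.
have A0 : 0 <= A by rewrite /A divr_ge0 // ?powR_ge0 // /C2 mulr_ge0 // powR_ge0.
pose y := 2 * d1 * lstar `^ g1.
have y0 : 0 <= y by rewrite /y !mulr_ge0 // ?powR_ge0 // ltW.
pose c := ln (4 * (M * K) * expR (mu * T)).
have c0 : 0 < c.
  rewrite /c ln_gt0 //.
  have : 1 <= expR (mu * T) by rewrite -expR0 ler_expR mulr_ge0 // ltW.
  have : 1 <= M * K by rewrite -[1]mulr1 ler_pM.
  move=> h1 h2; nra.
pose u0 := Num.max A (Num.max c y).
have u0A : A <= u0 by rewrite le_max lexx.
have u0c : c <= u0 by rewrite !le_max lexx orbT.
have u0y : y <= u0 by rewrite !le_max lexx !orbT.
have u00 : 0 < u0 by apply: lt_le_trans u0c.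
pose uk (k : nat) := u0 * a ^+ k.
have uk0 k : u0 <= uk k.
  rewrite /uk -{1}[u0]mulr1; apply: ler_wpM2l; [exact: ltW | exact: exprn_ege1].
have ukp k : 0 < uk k by apply: lt_le_trans (uk0 k).
pose lam (k : nat) := (uk k / d1) `^ (1 / g1).
have lam_g1 k : d1 * lam k `^ g1 = uk k.
  rewrite /lam -powRrM (_ : 1 / g1 * g1 = 1); last by rewrite mul1r mulVf // gt_eqF.
  rewrite powRr1; last by apply: divr_ge0; apply: ltW.
  by rewrite mulrC divfK // gt_eqF.
have lam_gt k : lstar < lam k.
  have z0 : 0 <= lstar `^ g1 := powR_ge0 _ _.
  have hz : lstar `^ g1 < uk k / d1.
    rewrite ltr_pdivlMr //.
    have : y <= uk k by apply: le_trans u0y (uk0 k).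
    rewrite /y => h; have := ukp k; nra.
  have e : (lstar `^ g1) `^ (1 / g1) = lstar.
    by rewrite -powRrM (_ : g1 * (1 / g1) = 1) ?powRr1 // mul1r mulfV // gt_eqF.
  rewrite -[X in X < _]e.
  apply: gt0_ltr_powR => //; first by rewrite divr_gt0.
  rewrite nnegrE; apply: divr_ge0; apply: ltW => //.
pose n (k : nat) := `|S (T / 2 ^+ k) x|.
pose G := M * d0 * expR (mu * T).
have MK0 : 0 <= M * K by apply: mulr_ge0; lra.
have MK1 : 1 <= M * K by rewrite -[1]mulr1 ler_pM.
have ec : expR c = 4 * (M * K) * expR (mu * T).
  rewrite /c lnK // posrE; apply: mulr_gt0; [apply: mulr_gt0; lra | exact: expR_gt0].
have ukS k : uk k.+1 = a * uk k by rewrite /uk exprS; ring.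
have rec k : n k <= G * expR (uk k) * 2 ^+ k.+2 * Yv
                    + 4^-1 * expR (uk k - uk k.+1) * n k.+1.
  pose tau := T / 2 ^+ k.+1.
  have p2k j : (0 : R) < 2 ^+ j by rewrite exprn_gt0.
  have tau0 : 0 < tau by rewrite /tau divr_gt0.
  have h2k : (1 : R) <= 2 ^+ k := exprn_ege1 _ two1.
  have tauT : tau <= T / 2.
    have -> : tau = T / 2 / 2 ^+ k by rewrite /tau exprS; field; rewrite gt_eqF.
    rewrite ler_pdivrMr //.
    have : 0 <= T / 2 by rewrite divr_ge0 // ltW.
    move=> h; nra.
  have eS : tau + tau = T / 2 ^+ k by rewrite /tau exprS; field; rewrite gt_eqF.
  have aT : tau + tau <= T.
    rewrite eS ler_pdivrMr //; nra.
  have h := stepL R X Y C S M w lstar P d0 d1 g1 d2 d3 g2 g3 T nC hnC hC hS hM M1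
    hd0 hd1 hd2 hd3 hg3 hP1 hP2 x tau tau (lam k) r Lr (ltW tau0) tau0 tauT (lam_gt k) aT hr hL Tp0.
  rewrite eS !lam_g1 -/mu -/K -/Yv in h.
  have e2T : 2 * T / tau = 2 ^+ k.+2.
    by rewrite /tau !exprS; field; rewrite gt_eqF // gt_eqF.
  rewrite e2T in h.
  have emu : expR (mu * tau) <= expR (mu * T).
    rewrite ler_expR; apply: ler_wpM2l => //.
    by apply: le_trans aT; rewrite lerDr ltW.
  have et : tau / 2 = T / 2 ^+ k.+2 by rewrite /tau [in RHS]exprS; field; rewrite gt_eqF.
  set D := d3 * lam k `^ g2 * (tau / 2) `^ g3 in h.
  have hD : 2 * a * uk k <= D.
    rewrite /D et; exact: (Dk_bound R d1 d3 g1 g2 g3 T u0 k hd1 hd3 hg1 hg12 hg3 hT u0A).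
  have hua : uk k <= a * uk k by have := ukp k; nra.
  have hcu : c <= uk k := le_trans u0c (uk0 k).
  have hx : c + uk k.+1 <= D by rewrite ukS; nra.
  have hE : M * expR (mu * tau) * K * expR (uk k) * expR (- D)
             <= 4^-1 * expR (uk k - uk k.+1).
    apply: le_trans (_ : M * K * expR (mu * T) * expR (uk k - D) <= _).
      have -> : M * expR (mu * tau) * K * expR (uk k) * expR (- D)
                = M * K * expR (uk k - D) * expR (mu * tau).
        by rewrite [expR (uk k - D)]expRD; ring.
      have -> : M * K * expR (mu * T) * expR (uk k - D)
                = M * K * expR (uk k - D) * expR (mu * T) by ring.
      by apply: ler_wpM2l => //; rewrite mulr_ge0 // expR_ge0.
    have -> : M * K * expR (mu * T) = 4^-1 * expR c by rewrite ec; field.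
    rewrite -mulrA -expRD; apply: ler_wpM2l; first by lra.
    rewrite ler_expR; lra.
  apply: le_trans h _; apply: lerD.
  - have ha : M * expR (mu * tau) * d0 * expR (uk k) <= G * expR (uk k).
      have -> : M * expR (mu * tau) * d0 * expR (uk k) = (M * d0 * expR (uk k)) * expR (mu * tau) by ring.
      have -> : G * expR (uk k) = (M * d0 * expR (uk k)) * expR (mu * T) by rewrite /G; ring.
      by apply: ler_wpM2l => //; rewrite !mulr_ge0 ?expR_ge0 // ltW.
    apply: ler_wpM2r => //; apply: ler_wpM2r => //; exact: ltW.
  - by apply: ler_wpM2r => //; exact: normr_ge0.
have nB k : n k <= M * expR (mu * T) * `|x|.
  have t0 : 0 <= T / 2 ^+ k by rewrite divr_ge0 ?exprn_ge0 // ltW.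
  apply: le_trans (hM _ t0 x) _; apply: ler_wpM2r => //; apply: ler_wpM2l; first lra.
  rewrite ler_expR; apply: le_trans (_ : mu * (T / 2 ^+ k) <= _).
    by apply: ler_wpM2r => //; rewrite le_max lexx.
  apply: ler_wpM2l => //; rewrite ler_pdivrMr ?exprn_gt0 //.
  have : (1 : R) <= 2 ^+ k := exprn_ege1 _ two1.
  move=> h; nra.
have G0 : 0 <= G by rewrite /G !mulr_ge0 ?expR_ge0 //; lra.
have hit := iter_bound R n uk G Yv (M * expR (mu * T) * `|x|) G0 Y0
  (fun k => normr_ge0 _) nB (fun k => ltW (ukp k)) rec.
have n0 : n 0 = `|S T x| by rewrite /n expr0 divr1.
have uk00 : uk 0 = u0 by rewrite /uk expr0 mulr1.
rewrite n0 uk00 in hit.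
have X4 : 4 <= Z `^ (8 / q) := le_trans Z4 ZpZ.
have hE' : expR (2 * y) <= expR (4 * d1 * (2 * lstar) `^ g1).
  rewrite ler_expR /y (_ : 2 * (2 * d1 * lstar `^ g1) = 4 * d1 * lstar `^ g1); last by ring.
  apply: ler_wpM2l; first by rewrite mulr_ge0 // ltW.
  apply: ge0_ler_powR; [exact: ltW | by rewrite nnegrE | by rewrite nnegrE mulr_ge0 | lra].
have KB := const_bound R A y mu T (Z `^ (8 / q)) (expR (4 * d1 * (2 * lstar) `^ g1)) C3 (M * K) A0 MK1 mu0 hT y0 X8 X4 hE' C3ge.
apply: le_trans hit _.
rewrite /Cobs /C1 -/nC -/Z -/q -/b -/A expRD.
apply: le_trans (_ : (4 * M * d0) * (2 * expR (mu * T) * expR u0) * Yv <= _).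
  by apply: eqle; rewrite /G; ring.
apply: le_trans (_ : (4 * M * d0) * (Num.max (Z `^ (8 / q)) (expR (4 * d1 * (2 * lstar) `^ g1))
                     * expR A * expR (C3 * T)) * Yv <= _).
  apply: ler_wpM2r => //; apply: ler_wpM2l => //; rewrite !mulr_ge0 //; lra.
by apply: eqle; rewrite /Yv; ring.
Qed.
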